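(* Let $m\ge 2$ and let $\mathcal A=\{A,B_1,\dots,B_m\}$ be a set of $m+1$ agents. There are infinitely many positive integers $a$ for which there exist a prime power $q$, an integer $d>0$ and a distribution type $\tau$ over $\mathcal A$ such that $(m,q,d,\tau)$ are suitable parameters, $\tau_P\in(a,4m^2a)$ for every agent $P\in\mathcal A$, and the shifted projection protocol for $(m,q,d,\tau)$ is informative and perfectly safe.
   Context: A distribution type is a vector $\tau=(\tau_P)_{P\in\mathcal A}$ of positive integers, $|\tau|=\sum_P\tau_P$; the deck $\Omega$ is a set of $|\tau|$ cards; a deal of type $\tau$ is a partition $H=(H_P)_P$ of $\Omega$ with $|H_P|=\tau_P$. Suitable parameters: $(m,q,d,\tau)$ with $m>1$, $q>m$ a prime power, $d>0$ an integer, $|\tau|=q^{d+1}$, $\tau_A=q^{d+1}-q^d$ and $\tau_{B_k}>q^{d-1}$ for each $k\in[1,m]$. Geometry: a transversal hyperplane $V\subseteq\mathbb F_q^{d+1}$ is the set of $x$ with $x_{d+1}=a_1x_1+\dots+a_dx_d+b$; $\sigma(V)=(a_1,\dots,a_d)$. $\pi:\mathbb F_q^{d+1}\to\mathbb F_q^d$ is projection onto the first $d$ coordinates; $\pi^V_\downarrow(w)=\pi(w)+\sigma(V)$ for $w\in V$. Shifted projection protocol (agents speak in order $A,B_1,\dots,B_m$; tokens are maps $\Omega\to\mathbb F_q^{d+1}$ and subsets of $\mathbb F_q^d$): the maximal executions for a deal $H$ are $(H,f,X_1,\dots,X_m)$ with $f:\Omega\to\mathbb F_q^{d+1}$ a bijection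 such that $V=\mathbb F_q^{d+1}\setminus f[H_A]$ is a transversal hyperplane and $X_k=\pi^V_\downarrow[f[H_{B_k}]]$. $\Pi(H,\rho)$ = set of tokens $a$ with $(H,\rho*a)$ an initial segment of a maximal execution. An execution is $(H,\rho)$ with each token of $\rho$ in $\Pi(H,\cdot)$ of the preceding prefix; $\rho$ is a run of $\Pi$ if some $(H,\rho)$ is an execution; $(H,\rho)$ is terminal if $\Pi(H,\rho)=\emptyset$. Informative: for every terminal execution $(H,\rho)$ and agent $P$ there is no execution $(H',\rho)$ with $H'\ne H$, $H'_P=H_P$. Probability model: deal uniform among deals of type $\tau$; then tokens are successively drawn uniformly from $\Pi(H,\rho)$ while nonempty; event ''$\rho$'' = first $|\rho|$ tokens equal $\rho$. Perfectly safe: for every run $\rho$ of $\Pi$, card $c$, agent $P$, $\Pr(c\in H_P\mid\rho)=\tau_P/|\tau|$. *)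

(* Defs.v *)
From mathcomp Require Import all_boot all_order all_algebra.
Import GRing.Theory.

(* Agents: [option 'I_m]; [None] is agent A, [Some k] is agent B_(k+1). *)
(* Deck Omega := 'I_(|tau|); field F_q := a finite field F, q = #|F|.     *)

Definition is_prime_power (q : nat) : Prop :=
  exists p k : nat, prime p /\ 0 < k /\ q = p ^ k.

Section Protocol.
Variables (m : nat) (F : finFieldType) (d : nat) (tau : {ffun option 'I_m -> nat}).

Definition total : nat := \sum_(P : option 'I_m) tau P.

Definition deal := {ffun option 'I_m -> {set 'I_total}}.

Definition is_deal (H : deal) : bool :=
  [&& [forall P, #|H P| == tau P],
      [forall P, forall Q, (P != Q) ==> [disjoint H P & H Q]] &
      (\bigcup_(P : option 'I_m) H P == setT)].

Definition token := ({ffun 'I_total -> 'rV[F]_(d.+1)} + {set 'rV[F]_d})%type.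

(* coordinates x_1..x_(d+1) are indices 0..d; x_(d+1) is [ord_max] *)
Definition hyper (a : 'rV[F]_d) (b : F) : {set 'rV[F]_(d.+1)} :=
  [set x : 'rV[F]_(d.+1) | x 0%R ord_max == (\sum_(i < d) a 0%R i * x 0%R (widen_ord (leqnSn d) i) + b)%R].

Definition proj (x : 'rV[F]_(d.+1)) : 'rV[F]_d :=
  \row_(i < d) x 0%R (widen_ord (leqnSn d) i).

(* maximal executions (H, f, X_1, ..., X_m): V = F^(d+1) \ f[H_A] is the
   transversal hyperplane x_(d+1) = a.x + b, so sigma(V) = a, and
   X_k = pi^V_down[f[H_(B_k)]] = { pi(w) + a | w in f[H_(B_k)] }. *)
Definition maxexec (H : deal) (rho : seq token) : bool :=
  [exists f : {ffun 'I_total -> 'rV[F]_(d.+1)}, [exists a : 'rV[F]_d, [exists b : F,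
    [&& injectiveb f, [forall y, [exists x, f x == y]],
        ~: (f @: H None) == hyper a b &
        rho == (inl f : token) ::
               [seq (inr [set (proj w + a)%R | w in f @: H (Some k)] : token)
               | k <- enum 'I_m]]]]].

(* Pi(H, rho): tokens t such that (H, rho * t) is an initial segment of a
   maximal execution (maximal executions have exactly m+1 tokens). *)
Definition Pi (H : deal) (rho : seq token) : {set token} :=
  [set t | [exists s : (m.+1).-tuple token, maxexec H s && prefix (rcons rho t) s]].

Definition tok0 : token := inr set0.

Definition is_exec (H : deal) (rho : seq token) : bool :=
  is_deal H &&
  all (fun i => nth tok0 rho i \in Pi H (take i rho)) (iota 0 (size rho)).

Definition is_run (rho : seq token) : Prop := exists H : deal, is_exec H rho.

Definition is_terminal (H : deal) (rho : seq token) : bool :=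
  is_exec H rho && (Pi H rho == set0).

Definition informative : Prop :=
  forall (H : deal) (rho : seq token) (P : option 'I_m),
    is_terminal H rho ->
    forall H' : deal, is_exec H' rho -> H' P = H P -> H' = H.

Definition n_deals : nat := #|[set H : deal | is_deal H]|.

(* Pr(deal = H and first |rho| tokens = rho) *)
Definition prob_joint (H : deal) (rho : seq token) : rat :=
  if is_exec H rho then
    ((n_deals%:R)^-1 * \prod_(i < size rho) (#|Pi H (take i rho)|%:R)^-1)%R
  else 0%R.

Definition prob_ev (E : pred deal) (rho : seq token) : rat :=
  (\sum_(H : deal | is_deal H && E H) prob_joint H rho)%R.

Definition perfectly_safe : Prop :=
  forall rho : seq token, is_run rho ->
  forall (c : 'I_total) (P : option 'I_m),
    (prob_ev (fun H => c \in H P) rho / prob_ev predT rho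
     = (tau P)%:R / (total)%:R)%R.

End Protocol.

Definition suitable (m q d : nat) (tau : {ffun option 'I_m -> nat}) : Prop :=
  1 < m /\ m < q /\ is_prime_power q /\ 0 < d /\
  (forall P, 0 < tau P) /\
  total m tau = q ^ d.+1 /\
  tau None = q ^ d.+1 - q ^ d /\
  (forall k : 'I_m, q ^ d.-1 < tau (Some k)).

(* Main.v *)
Require Import Defs.
From mathcomp Require Import all_boot all_order all_algebra all_fingroup all_field.
From mathcomp Require Import ring zify.
Import Order.TTheory GRing.Theory Num.Theory.

Set Implicit Arguments.
Unset Strict Implicit.
Unset Printing Implicit Defensive.

Section Geom.
Variables (F : finFieldType) (d : nat).
Local Open Scope ring_scope.
Local Notation proj := (@proj F d).
Local Notation hyper := (@hyper F d).

Definition dot (a v : 'rV[F]_d) : F := \sum_(i < d) a 0 i * v 0 i.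

Definition mkpt (v : 'rV[F]_d) (y : F) : 'rV[F]_(d.+1) :=
  \row_(j < d.+1) odflt y (omap (fun i : 'I_d => v 0 i) (insub (val j))).

Lemma proj_mkpt v y : proj (mkpt v y) = v.
Proof.
apply/rowP => i; rewrite !mxE; case: insubP => [i' _ Hi|] /=.
  by congr (v 0 _); apply: val_inj; rewrite Hi.
by rewrite /= ltn_ord.
Qed.

Lemma last_mkpt v y : mkpt v y 0 ord_max = y.
Proof. by rewrite mxE; case: insubP => [i' Hi _|] //=; rewrite ltnn in Hi. Qed.

Lemma mkptE x : x = mkpt (proj x) (x 0 ord_max).
Proof.
apply/rowP => j; rewrite !mxE; case: insubP => [i Hi Hv|Hn] /=.
  by rewrite mxE; congr (x 0 _); apply: val_inj; rewrite /= Hv.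
congr (x 0 _); apply: val_inj => /=; have := ltn_ord j; rewrite ltnS.
by rewrite leq_eqVlt (negbTE Hn) orbF => /eqP.
Qed.

Lemma pt_eq x y : proj x = proj y -> x 0 ord_max = y 0 ord_max -> x = y.
Proof. by move=> H1 H2; rewrite (mkptE x) (mkptE y) H1 H2. Qed.

Lemma in_hyper a b x : (x \in hyper a b) = (x 0 ord_max == dot a (proj x) + b).
Proof. by rewrite inE /dot; congr (_ == _ + _); apply: eq_bigr => i _; rewrite mxE. Qed.

Lemma dotDr a u v : dot a (u + v) = dot a u + dot a v.
Proof. by rewrite /dot -big_split; apply: eq_bigr => i _; rewrite !mxE mulrDr. Qed.
Lemma dotZr a t u : dot a (t *: u) = t * dot a u.
Proof. by rewrite /dot mulr_sumr; apply: eq_bigr => i _; rewrite !mxE mulrCA. Qed.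
Lemma dotBl a a' u : dot (a - a') u = dot a u - dot a' u.
Proof. by rewrite /dot -sumrB; apply: eq_bigr => i _; rewrite !mxE mulrBl. Qed.
Lemma dotDl a a' u : dot (a + a') u = dot a u + dot a' u.
Proof. by rewrite /dot -big_split; apply: eq_bigr => i _; rewrite !mxE mulrDl. Qed.
Lemma dotNr a u : dot a (- u) = - dot a u.
Proof. by rewrite /dot -sumrN; apply: eq_bigr => i _; rewrite !mxE mulrN. Qed.
Lemma dot0r a : dot a 0 = 0.
Proof. by rewrite /dot big1 // => i _; rewrite mxE mulr0. Qed.

Lemma card_rV : #|{: 'rV[F]_d}| = (#|F| ^ d)%N.
Proof. by rewrite card_mx mul1n. Qed.

Lemma card_hyper a b : #|hyper a b| = (#|F| ^ d)%N.
Proof.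
have -> : hyper a b = [set mkpt v (dot a v + b) | v in [set: 'rV[F]_d]].
  apply/setP => x; apply/idP/imsetP => [|[v _ ->]].
    rewrite in_hyper => /eqP Hx; exists (proj x); first by rewrite inE.
    by rewrite {1}(mkptE x) Hx.
  by rewrite in_hyper proj_mkpt last_mkpt.
rewrite card_imset ?cardsT ?card_rV //.
by move=> v w /(congr1 proj); rewrite !proj_mkpt.
Qed.

Lemma level_bound (c : 'rV[F]_d) (e : F) : c != 0 ->
  (#|[set v : 'rV[F]_d | dot c v == e]| * #|F| <= #|F| ^ d)%N.
Proof.
move=> cnz.
have [i ci] : exists i, c 0 i != 0.
  apply/existsP; apply: contraR cnz => /existsPn H.
  by apply/eqP/rowP => i; rewrite mxE; apply/eqP; move: (H i); rewrite negbK.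
pose u : 'rV[F]_d := \row_j (if j == i then (c 0 i)^-1 else 0).
have du : dot c u = 1.
  rewrite /dot (bigD1 i) //= big1 => [|j /negbTE ji]; last by rewrite mxE ji mulr0.
  by rewrite mxE eqxx addr0 mulfV.
set L := [set v | _].
pose psi (p : 'rV[F]_d * F) := p.1 + p.2 *: u.
have inj : {in setX L [set: F] &, injective psi}.
  move=> [v t] [v' t']; rewrite !inE /= => /andP[/eqP Hv _] /andP[/eqP Hv' _].
  rewrite /psi /= => E.
  have Et : t = t'.
    have := congr1 (dot c) E; rewrite !dotDr !dotZr du Hv Hv' !mulr1.
    by move/addrI.
  by move: E; rewrite Et => /addIr ->.
rewrite -card_rV -[X in (_ * X)%N]cardsT -(cardsX L [set: F]) -(card_in_imset inj).
by rewrite -cardsT subset_leq_card // subsetT.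
Qed.


Definition Tm (dl : 'rV[F]_d) (e : F) (x : 'rV[F]_(d.+1)) : 'rV[F]_(d.+1) :=
  mkpt (proj x + dl) (x 0 ord_max - dot dl (proj x) + e).

Lemma proj_Tm dl e x : proj (Tm dl e x) = proj x + dl.
Proof. by rewrite proj_mkpt. Qed.

Lemma Tm_inj dl e : injective (Tm dl e).
Proof.
move=> x y E; have Ep : proj x = proj y.
  by have := congr1 proj E; rewrite !proj_Tm => /addIr.
apply: pt_eq => //; have := congr1 (fun z : 'rV[F]_(d.+1) => z 0 ord_max) E.
by rewrite /Tm !last_mkpt Ep => /addIr /addIr.
Qed.

Lemma Tm_hyper dl e a b : Tm dl e @: hyper a b = hyper (a - dl) (b + e - dot (a - dl) dl).
Proof.
apply/eqP; rewrite eqEcard card_imset ?card_hyper ?leqnn ?andbT; last exact: Tm_inj.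
apply/subsetP => y /imsetP [x xh ->]; move: xh; rewrite !in_hyper => /eqP Ex.
rewrite proj_Tm /Tm last_mkpt Ex dotDr !dotBl.
by apply/eqP; ring.
Qed.

Lemma Tm_trans x y : exists dl e, Tm dl e x = y.
Proof.
exists (proj y - proj x), (y 0 ord_max - x 0 ord_max + dot (proj y - proj x) (proj x)).
apply: pt_eq; first by rewrite proj_Tm addrC subrK.
by rewrite /Tm last_mkpt; ring.
Qed.

Lemma Tm_trans_inv dl e y : exists x, Tm dl e x = y.
Proof.
exists (mkpt (proj y - dl) (y 0 ord_max + dot dl (proj y - dl) - e)).
apply: pt_eq; first by rewrite proj_Tm proj_mkpt subrK.
rewrite /Tm !last_mkpt proj_mkpt; ring.
Qed.

Lemma Tm_setC dl e (A : {set 'rV[F]_(d.+1)}) : ~: (Tm dl e @: A) = Tm dl e @: (~: A).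
Proof.
apply/setP => y; have [x <-] := Tm_trans_inv dl e y.
by rewrite !inE !mem_imset ?inE //; apply: Tm_inj.
Qed.

Hypothesis hd : (0 < d)%N.

Lemma inter_bound a b a' b' (S : {set 'rV[F]_d.+1}) : a != a' ->
  S \subset hyper a b -> S \subset hyper a' b' -> (#|S| <= #|F| ^ d.-1)%N.
Proof.
move=> aa' S1 S2.
have cnz : a - a' != 0 by rewrite subr_eq0.
have H1 := level_bound (b' - b) cnz.
have qpos : (0 < #|F|)%N by apply/card_gt0P; exists 0.
have Lb : (#|[set v : 'rV[F]_d | dot (a - a') v == (b' - b)%R]| <= #|F| ^ d.-1)%N.
  by rewrite -(leq_pmul2r qpos) -expnSr prednK.
apply: leq_trans Lb.
have inj : {in S &, injective proj}.
  move=> x y /(subsetP S1) Hx /(subsetP S1) Hy E; apply: pt_eq => //.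
  by move: Hx Hy; rewrite !in_hyper => /eqP -> /eqP ->; rewrite E.
rewrite -(card_in_imset inj); apply: subset_leq_card; apply/subsetP => v /imsetP [x xS ->].
rewrite inE dotBl; move: (subsetP S1 x xS) (subsetP S2 x xS); rewrite !in_hyper => /eqP E1 /eqP E2.
apply/eqP; move: E2; rewrite E1 => /eqP; rewrite -subr_eq => /eqP <-.
by ring.

Qed.

Lemma hyper_inj a b a' b' : hyper a b = hyper a' b' -> a = a' /\ b = b'.
Proof.
move=> E.
have aa : a = a'.
  apply/eqP; apply: contraT => ne.
  have S2 : hyper a b \subset hyper a' b' by rewrite E.
  have := inter_bound ne (subxx (hyper a b)) S2.
  rewrite card_hyper leqNgt => H; exfalso; move/negP: H; apply; rewrite -{2}(prednK hd) expnS.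
  rewrite -{1}(mul1n (_ ^ _)%N) ltn_pmul2r ?card_finNzRing_gt1 //.
  by rewrite expn_gt0 ltnW ?card_finNzRing_gt1.
split => //; have : mkpt 0 b \in hyper a b by rewrite in_hyper proj_mkpt last_mkpt dot0r add0r.
by rewrite E in_hyper proj_mkpt last_mkpt dot0r add0r => /eqP.
Qed.

End Geom.
Section Bij.
Variables (X Y : finType).

Lemma inj_surj (f : X -> Y) : injective f -> #|X| = #|Y| -> forall y, exists x, f x = y.
Proof.
move=> fi XY y.
have E : f @: [set: X] = [set: Y].
  by apply/eqP; rewrite eqEcard subsetT card_imset // !cardsT XY leqnn.
have : y \in f @: [set: X] by rewrite E inE.
by case/imsetP => x _ ->; exists x.
Qed.

Lemma exists_bij (A : {set X}) (B : {set Y}) : #|X| = #|Y| -> #|A| = #|B| ->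
  exists f : X -> Y, injective f /\ f @: A = B.
Proof.
move=> XY AB.
have AB' : #|~: A| = #|~: B|.
  by have := cardsC A; have := cardsC B; lia.
pose g (x : X) : Y := enum_val (cast_ord XY (enum_rank x)).
pose f (x : X) : Y := if x \in A then nth (g x) (enum B) (index x (enum A))
                      else nth (g x) (enum (~: B)) (index x (enum (~: A))).
have key : forall (A : {set X}) (B : {set Y}), #|A| = #|B| -> forall x1 x2 y1 y2,
    x1 \in A -> x2 \in A -> nth y1 (enum B) (index x1 (enum A)) = nth y2 (enum B) (index x2 (enum A)) ->
    x1 = x2 /\ nth y1 (enum B) (index x1 (enum A)) \in B.
  move=> A0 B0 E x1 x2 y1 y2 h1 h2.
  have i1 : index x1 (enum A0) < size (enum B0) by rewrite -cardE -E cardE index_mem mem_enum.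
  have i2 : index x2 (enum A0) < size (enum B0) by rewrite -cardE -E cardE index_mem mem_enum.
  rewrite (set_nth_default y1 y2 i2) => /eqP; rewrite nth_uniq ?enum_uniq // => /eqP Ei.
  split; last by rewrite -mem_enum mem_nth.
  by rewrite -[x1](@nth_index _ x1 x1 (enum A0)) ?mem_enum // Ei nth_index ?mem_enum.
have inB : forall x, x \in A -> f x \in B.
  move=> x xA; rewrite /f xA; have [] := key A B AB x x (g x) (g x) xA xA erefl; done.
have inCB : forall x, x \notin A -> f x \notin B.
  move=> x xA; rewrite /f (negbTE xA).
  have xA' : x \in ~: A by rewrite inE.
  have [_ H] := key _ _ AB' x x (g x) (g x) xA' xA' erefl.
  by move: H; rewrite inE.
have fi : injective f.
  move=> x1 x2; case: (boolP (x1 \in A)) => h1; case: (boolP (x2 \in A)) => h2.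
  - by move=> E; have := E; rewrite /f h1 h2 => E'; case: (key A B AB _ _ _ _ h1 h2 E').
  - by move=> E; have := inB _ h1; rewrite E (negbTE (inCB _ h2)).
  - by move=> E; have := inB _ h2; rewrite -E (negbTE (inCB _ h1)).
  - move=> E; have := E; rewrite /f (negbTE h1) (negbTE h2) => E'.
    have h1' : x1 \in ~: A by rewrite inE.
    have h2' : x2 \in ~: A by rewrite inE.
    by case: (key _ _ AB' _ _ _ _ h1' h2' E').
exists f; split => //; apply/eqP; rewrite eqEcard card_imset // AB leqnn andbT.
by apply/subsetP => y /imsetP [x xA ->]; apply: inB.
Qed.

End Bij.

Section Sym.
Variables (T : finType) (n : nat) (hand : T -> {set 'I_n}) (D : pred T) (w : T -> rat).
Local Open Scope ring_scope.

Lemma sym_sum (c c' : 'I_n) (Phi : T -> T) : injective Phi ->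
  (forall H, D H -> D (Phi H)) -> (forall H, D H -> w (Phi H) = w H) ->
  (forall H, (c' \in hand (Phi H)) = (c \in hand H)) ->
  \sum_(H | D H && (c' \in hand H)) w H = \sum_(H | D H && (c \in hand H)) w H.
Proof.
move=> Pi DP wP hP.
have DPhi : forall H, D (Phi H) = D H.
  have E : Phi @: [set H | D H] = [set H | D H].
    apply/eqP; rewrite eqEcard card_imset // leqnn andbT.
    by apply/subsetP => H' /imsetP [H + ->]; rewrite !inE; apply: DP.
  move=> H; apply/idP/idP => [DH|]; last exact: DP.
  have : Phi H \in Phi @: [set H | D H] by rewrite E inE.
  by rewrite mem_imset // inE.
rewrite (reindex_inj Pi) /=; apply: eq_big => [H|H /andP [DH _]]; first by rewrite DPhi hP.
by apply: wP; rewrite -DPhi.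
Qed.

Lemma sum_cards :
  \sum_(c : 'I_n) \sum_(H | D H && (c \in hand H)) w H =
  \sum_(H | D H) (#|hand H|)%:R * w H.
Proof.
rewrite (exchange_big_dep D) /=; last by move=> i j _ /andP [].
apply: eq_bigr => H DH.
rewrite (eq_bigl (fun c => c \in hand H)) ?sumr_const ?mulr_natl //.
by move=> c; rewrite DH.
Qed.

End Sym.

Section Proto.
Variables (m : nat) (F : finFieldType) (d : nat) (tau : {ffun option 'I_m -> nat}).
Local Notation tot := (Defs.total m tau).
Local Notation tk := (token m F d tau).
Local Notation dl := (deal m tau).
Local Notation proj := (@proj F d).
Local Notation hyper := (@hyper F d).
Local Notation maxexec := (@maxexec m F d tau).
Local Notation Pi := (@Pi m F d tau).
Local Notation is_exec := (@is_exec m F d tau).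
Local Notation is_deal := (@is_deal m tau).
Local Notation tok0 := (@tok0 m F d tau).
Local Notation prob_joint := (@prob_joint m F d tau).
Local Notation prob_ev := (@prob_ev m F d tau).

Definition mseq (f : {ffun 'I_tot -> 'rV[F]_(d.+1)}) (a : 'rV[F]_d) (H : dl) : seq tk :=
  (inl f : tk) :: [seq (inr [set (proj w + a)%R | w in f @: H (Some k)] : tk) | k <- enum 'I_m].

Lemma size_mseq f a (H : dl) : size (mseq f a H) = m.+1.
Proof. by rewrite /= size_map size_enum_ord. Qed.

Lemma maxexecP (H : dl) (s : seq tk) : reflect (exists (f : {ffun 'I_tot -> 'rV[F]_(d.+1)}) (a : 'rV[F]_d) (b : F), injective f /\ (forall y, exists x, f x = y) /\
   ~: (f @: H None) = hyper a b /\ s = mseq f a H) (maxexec H s).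
Proof.
apply: (iffP existsP) => [[f /existsP [a /existsP [b /and4P [fi fs hA /eqP E]]]] | [f [a [b [fi [fs [hA E]]]]]]].
  exists f, a, b; split; first exact/injectiveP.
  split; first by move=> y; move/forallP: fs => /(_ y) /existsP [x /eqP]; exists x.
  by split; [exact/eqP | exact E].
exists f; apply/existsP; exists a; apply/existsP; exists b; apply/and4P; split.
- exact/injectiveP.
- by apply/forallP => y; have [x fx] := fs y; apply/existsP; exists x; apply/eqP.
- exact/eqP.
- by apply/eqP.
Qed.

Lemma size_maxexec (H : dl) (s : seq tk) : maxexec H s -> size s = m.+1.
Proof. by case/maxexecP => f [a [b [_ [_ [_ ->]]]]]; rewrite size_mseq. Qed.

Lemma is_dealP (H : dl) : reflect ((forall P, #|H P| = tau P) /\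
   (forall P Q, P != Q -> [disjoint H P & H Q]) /\ (forall c, exists P, c \in H P)) (is_deal H).
Proof.
apply: (iffP and3P) => [[/forallP h1 /forallP h2 /eqP h3] | [h1 [h2 h3]]].
  split; first by move=> P; apply/eqP.
  split; first by move=> P Q; move/forallP: (h2 P) => /(_ Q) /implyP.
  move=> c; have : c \in \bigcup_P H P by rewrite h3 inE.
  by case/bigcupP => P _ cP; exists P.
split; first by apply/forallP => P; apply/eqP.
  by apply/forallP => P; apply/forallP => Q; apply/implyP; apply: h2.
apply/eqP/setP => c; rewrite inE; have [P cP] := h3 c.
by apply/bigcupP; exists P.
Qed.

Lemma PiP (H : dl) (rho : seq tk) (t : tk) : reflect (exists s, maxexec H s /\ prefix (rcons rho t) s) (t \in Pi H rho).
Proof.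
rewrite inE; apply: (iffP existsP) => [[s /andP [h1 h2]] | [s [h1 h2]]].
  by exists s.
have sz : size s == m.+1 by rewrite (size_maxexec h1).
by exists (Tuple sz); rewrite /= h1 h2.
Qed.

Lemma execP (H : dl) (rho : seq tk) : rho != [::] ->
  (is_exec H rho <-> is_deal H /\ exists s, maxexec H s /\ prefix rho s).
Proof.
move=> rn; rewrite /Defs.is_exec; split.
  case/andP => hd /allP Hall; split => //.
  have sz : (size rho).-1 < size rho by rewrite prednK ?ltnSn // lt0n size_eq0.
  have := Hall (size rho).-1; rewrite mem_iota add0n sz => /(_ erefl) /PiP [s [h1 h2]].
  exists s; split => //; move: h2; rewrite -take_nth // prednK ?take_size //.
  by rewrite lt0n size_eq0.
case=> hd [s [h1 h2]]; apply/andP; split => //; apply/allP => i.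
rewrite mem_iota add0n => /andP [_ ilt]; apply/PiP; exists s; split => //.
by rewrite -take_nth //; apply: prefix_trans h2; apply: prefix_take.
Qed.

Lemma exec_nil (H : dl) : is_exec H [::] = is_deal H.
Proof. by rewrite /Defs.is_exec /= andbT. Qed.

Lemma part_in_hyper (H : dl) (f : {ffun 'I_tot -> 'rV[F]_(d.+1)}) a b k c :
  is_deal H -> injective f -> ~: (f @: H None) = hyper a b -> c \in H (Some k) -> f c \in hyper a b.
Proof.
case/is_dealP => _ [hdis _] fi hA cB; rewrite -hA inE; apply/imsetP => [[c' c'A /fi E]].
have := hdis (Some k) None erefl; rewrite -setI_eq0 => /eqP/setP/(_ c).
by rewrite !inE cB E c'A.
Qed.

Hypothesis hd : (0 < d)%N.

Lemma Pi_uniq (H : dl) (rho : seq tk) (t1 t2 : tk) : rho != [::] -> t1 \in Pi H rho -> t2 \in Pi H rho -> t1 = t2.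
Proof.
case: rho => [//|r0 r] _ /PiP [s1 [m1 p1]] /PiP [s2 [m2 p2]].
case/maxexecP: m1 p1 => f1 [a1 [b1 [_ [_ [hA1 ->]]]]] p1.
case/maxexecP: m2 p2 => f2 [a2 [b2 [_ [_ [hA2 ->]]]]] p2.
move: (p1) (p2) => /= /andP [/eqP e1 _] /andP [/eqP e2 _].
have ff : f1 = f2 by move: e1; rewrite e2 => -[].
move: hA1; rewrite ff hA2 => /esym /hyper_inj => /(_ hd) [aa _].
move: p1 p2; rewrite ff aa !prefixE !size_rcons => /eqP E1 /eqP E2.
by move: E2; rewrite E1 => /rcons_inj [].
Qed.


Lemma charB (H : dl) (f : {ffun 'I_tot -> 'rV[F]_(d.+1)}) a b k c : is_deal H -> injective f -> ~: (f @: H None) = hyper a b ->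
  (c \in H (Some k)) = (c \notin H None) && (proj (f c) + a \in [set (proj w + a)%R | w in f @: H (Some k)])%R.
Proof.
move=> hdl fi hA; apply/idP/andP => [cB | [cA /imsetP [w /imsetP [c2 c2B ->] E]]].
  split; last by apply/imsetP; exists (f c) => //; apply: imset_f.
  case/is_dealP: hdl => _ [hdis _]; have := hdis (Some k) None erefl.
  by rewrite -setI_eq0 => /eqP/setP/(_ c); rewrite !inE cB /= => ->.
have h1 : f c \in hyper a b by rewrite -hA inE mem_imset.
have h2 := part_in_hyper hdl fi hA c2B.
have Ep : proj (f c) = proj (f c2) by apply: (addIr a).
suff -> : c = c2 by [].
apply: fi; apply: pt_eq => //.
by move: h1 h2; rewrite !in_hyper => /eqP -> /eqP ->; rewrite Ep.
Qed.

Lemma determine (H H' : dl) (f : {ffun 'I_tot -> 'rV[F]_(d.+1)}) a b : is_deal H -> is_deal H' -> injective f ->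
  ~: (f @: H None) = hyper a b -> ~: (f @: H' None) = hyper a b -> mseq f a H = mseq f a H' -> H = H'.
Proof.
move=> hdl hdl' fi hA hA' [] /eq_in_map E.
have eA : H None = H' None.
  by apply: (imset_inj fi); apply: setC_inj; rewrite hA hA'.
apply/ffunP => [[k|]] //; apply/setP => c.
rewrite (charB k c hdl fi hA) (charB k c hdl' fi hA') eA.
by have := E k (mem_enum _ _) => -[->].
Qed.

Hypotheses (htot : Defs.total m tau = (#|F| ^ d.+1)%N)
  (htauA : tau None = (#|F| ^ d.+1 - #|F| ^ d)%N)
  (htauB : forall k, (#|F| ^ d.-1 < tau (Some k))%N).

Lemma exists_mx (H : dl) : is_deal H -> exists (f : {ffun 'I_tot -> 'rV[F]_(d.+1)}) a b,
  injective f /\ (forall y, exists x, f x = y) /\ ~: (f @: H None) = hyper a b.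
Proof.
case/is_dealP => hc _.
have cX : #|'I_tot| = #|{: 'rV[F]_(d.+1)}| by rewrite card_ord card_rV htot.
have cA : #|H None| = #|~: hyper 0 0%R|.
  rewrite hc htauA; have := cardsC (hyper 0 0%R); rewrite card_hyper card_rV; lia.
have [g [gi gA]] := exists_bij cX cA.
have fi : injective [ffun x => g x] by move=> x y; rewrite !ffunE; apply: gi.
exists [ffun x => g x], 0%R, 0%R; split => //; split; first by apply: inj_surj.
have -> : [ffun x => g x] @: H None = g @: H None by apply: eq_imset => x; rewrite ffunE.
by rewrite gA setCK.
Qed.

Lemma full_exec (H : dl) (rho : seq tk) : rho != [::] -> is_exec H rho -> Pi H rho = set0 ->
  maxexec H rho.
Proof.
move=> rn /(execP H rn) [hdl [s [ms ps]]] Pi0.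
have E : take (size rho) s = rho by apply/eqP; rewrite -prefixE.
have := size_prefix ps; rewrite (size_maxexec ms) leq_eqVlt => /orP [/eqP sz | lt].
  by move: E; rewrite sz -(size_maxexec ms) take_size => <-.
have : nth tok0 s (size rho) \in Pi H rho.
  apply/PiP; exists s; split => //; rewrite -{1}E -take_nth ?(size_maxexec ms) //.
  exact: prefix_take.
by rewrite Pi0 inE.
Qed.

Theorem inform : informative m F d tau.
Proof.
move=> H rho P /andP [ex /eqP Pi0] H' ex' HP.
case: (eqVneq rho [::]) => [Er|rn].
  exfalso; move: ex Pi0; rewrite Er exec_nil => ex Pi0.
  have [f [a [b [fi [fs hA]]]]] := exists_mx ex.
  have : (inl f : tk) \in Pi H [::].
    apply/PiP; exists (mseq f a H); split; last by rewrite /= prefix0s andbT.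
    by apply/maxexecP; exists f, a, b.
  by rewrite Pi0 inE.
have ms := full_exec rn ex Pi0.
have [hdl _] := (execP H rn).1 ex.
have [hdl' [s' [ms' ps']]] := (execP H' rn).1 ex'.
have rs' : rho = s'.
  move: ps'; rewrite prefixE (size_maxexec ms) -(size_maxexec ms') take_size.
  by move/eqP.
case/maxexecP: ms => f [a [b [fi [fs [hA Er]]]]].
case/maxexecP: ms' => f' [a' [b' [fi' [fs' [hA' Er']]]]].
have ff : f' = f by move: Er'; rewrite -rs' Er => -[].
rewrite {}ff in fi' fs' hA' Er'.
suff [aa bb] : a' = a /\ b' = b.
  rewrite aa bb in hA' Er'; apply: (determine hdl' hdl fi hA' hA).
  by rewrite -Er' -rs' Er.
case: P HP => [k|] HP; last first.
  by apply: hyper_inj => //; rewrite -hA -hA' HP.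
have S1 : f @: H (Some k) \subset hyper a b.
  by apply/subsetP => w /imsetP [c cB ->]; apply: part_in_hyper hdl fi hA cB.
have S2 : f @: H (Some k) \subset hyper a' b'.
  by apply/subsetP => w /imsetP [c cB ->]; apply: (part_in_hyper (k:=k) hdl' fi hA'); rewrite HP.
have cS : #|f @: H (Some k)| = tau (Some k).
  by rewrite card_imset //; case/is_dealP: hdl => ->.
have aa : a' = a.
  apply/eqP; apply: contraT => ne.
  rewrite eq_sym in ne; have := inter_bound hd ne S1 S2; rewrite cS leqNgt htauB.
  done.
split => //.
have : (0 < #|H (Some k)|)%N by case/is_dealP: hdl => [-> _]; apply: leq_trans (htauB k).
case/card_gt0P => c cB.
have := subsetP S1 _ (imset_f f cB); have := subsetP S2 _ (imset_f f cB).
rewrite !in_hyper aa => /eqP -> /eqP; apply: addrI.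
Qed.

Definition act (s : {perm 'I_tot}) (H : dl) : dl := [ffun P => [set c | (s^-1)%g c \in H P]].

Lemma act_in s H P c : (c \in act s H P) = ((s^-1)%g c \in H P).
Proof. by rewrite ffunE inE. Qed.

Lemma act_deal s H : is_deal H -> is_deal (act s H).
Proof.
case/is_dealP => [h1 [h2 h3]]; apply/is_dealP; split; [|split].
- move=> P; rewrite -h1 ffunE.
  have -> : [set c | (s^-1)%g c \in H P] = (s^-1)%g @^-1: H P by apply/setP=> c; rewrite !inE.
  by rewrite card_preimset //; apply: perm_inj.
- move=> P Q ne; rewrite disjoint_subset; apply/subsetP => x; rewrite !inE !act_in => xP.
  by rewrite (disjointFr (h2 P Q ne) xP).
- by move=> c; have [P hP] := h3 ((s^-1)%g c); exists P; rewrite act_in.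
Qed.

Lemma actK s : cancel (act s) (act s^-1).
Proof. by move=> H; apply/ffunP => P; apply/setP => c; rewrite !act_in invgK permK. Qed.

Lemma act_inj s : injective (act s).
Proof. exact: can_inj (actK s). Qed.

Definition relf (s : {perm 'I_tot}) (f : {ffun 'I_tot -> 'rV[F]_(d.+1)}) : {ffun 'I_tot -> 'rV[F]_(d.+1)} :=
  [ffun c => f ((s^-1)%g c)].

Lemma imset_rel s f H P : relf s f @: act s H P = f @: H P.
Proof.
apply/setP => y; apply/imsetP/imsetP => [[c cin ->] | [c cin ->]].
  by exists ((s^-1)%g c); [rewrite -act_in | rewrite ffunE].
by exists (s c); [rewrite act_in permK | rewrite ffunE permK].
Qed.

Lemma Pi_nil_le s H : (#|Pi H [::]| <= #|Pi (act s H) [::]|)%N.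
Proof.
pose rl (t : tk) : tk := match t with inl f => inl (relf s f) | inr X => inr X end.
have rli : injective rl.
  move=> [f|X] [f'|X'] //=.
  move=> [] E; congr inl; apply/ffunP => x; move/ffunP: E => /(_ (s x)).
  by rewrite !ffunE permK.
apply: (@leq_trans #|rl @: Pi H [::]|); first by rewrite card_imset.
apply: subset_leq_card; apply/subsetP => t' /imsetP [t /PiP [s0 [ms pr]] ->].
case/maxexecP: ms pr => f [a [b [fi [fs [hA ->]]]]] /= /andP [/eqP -> _].
apply/PiP; exists (mseq (relf s f) a (act s H)); split; last by rewrite /= prefix0s andbT.
apply/maxexecP; exists (relf s f), a, b; split; [|split; [|split]] => //.
- by move=> x y; rewrite !ffunE => /fi; apply: perm_inj.
- by move=> y; have [x <-] := fs y; exists (s x); rewrite ffunE permK.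
- by rewrite imset_rel.
Qed.

Lemma Pi_nil_card s H : #|Pi (act s H) [::]| = #|Pi H [::]|.
Proof.
have h1 := Pi_nil_le s H; have h2 := Pi_nil_le s^-1 (act s H); rewrite actK in h2.
by apply/eqP; rewrite eqn_leq; apply/andP; split; [exact: h2 | exact: h1].
Qed.

Lemma Pi_card1 H rho i : is_exec H rho -> (0 < i)%N -> (i < size rho)%N -> #|Pi H (take i rho)| = 1%N.
Proof.
move=> ex i0 isz.
have tin : nth tok0 rho i \in Pi H (take i rho).
  by move/andP: ex => [_ /allP]; apply; rewrite mem_iota add0n isz.
have tn : take i rho != [::] by rewrite -size_eq0 size_take isz -lt0n.
rewrite -[RHS](cards1 (nth tok0 rho i)); apply: eq_card => t; rewrite [RHS]inE.
by apply/idP/eqP => [tP|->] //; exact: Pi_uniq tn tP tin.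
Qed.

Lemma pj_act s rho H : is_exec H rho -> is_exec (act s H) rho ->
  prob_joint (act s H) rho = prob_joint H rho.
Proof.
move=> ex ex'; rewrite /Defs.prob_joint ex ex'.
apply: (congr1 (GRing.mul _)).
apply: eq_bigr => -[[|i] ilt] _.
  rewrite take0.
  apply: (congr1 (fun n : nat => (n%:R)^-1 : rat)%R).
  exact: (Pi_nil_card s H).
have i0 : (0 < i.+1)%N by [].
apply: (congr1 (fun n : nat => (n%:R)^-1 : rat)%R).
have E1 := Pi_card1 ex i0 ilt; have E2 := Pi_card1 ex' i0 ilt.
exact: (etrans E2 (esym E1)).
Qed.

Lemma build_perm (f : {ffun 'I_tot -> 'rV[F]_(d.+1)}) dl e : injective f -> (forall y, exists x, f x = y) ->
  exists s : {perm 'I_tot}, forall c, f (s c) = Tm dl e (f c).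
Proof.
move=> fi fs.
pose sg c := odflt c [pick c' | f c' == Tm dl e (f c)].
have sgE : forall c, f (sg c) = Tm dl e (f c).
  move=> c; rewrite /sg; case: pickP => [c' /eqP //|none].
  by have [x fx] := fs (Tm dl e (f c)); move: (none x); rewrite fx eqxx.
have sgi : injective sg by move=> x y E; apply: fi; apply: (@Tm_inj _ _ dl e); rewrite -!sgE E.
by exists (perm sgi) => c; rewrite permE.
Qed.

Lemma act_imset (s : {perm 'I_tot}) (f : {ffun 'I_tot -> 'rV[F]_(d.+1)}) dl e (H : deal m tau) P : (forall c, f (s c) = Tm dl e (f c)) ->
  f @: act s H P = Tm dl e @: (f @: H P).
Proof.
move=> fs; apply/setP => y; apply/imsetP/imsetP => [[c cin ->]|[z /imsetP [c0 c0in ->] ->]].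
  exists (f ((s^-1)%g c)); first by apply: imset_f; rewrite -act_in.
  by rewrite -fs permKV.
by exists (s c0); [rewrite act_in permK | rewrite fs].
Qed.

Lemma mseq_act (s : {perm 'I_tot}) (f : {ffun 'I_tot -> 'rV[F]_(d.+1)}) dl e a (H : deal m tau) : (forall c, f (s c) = Tm dl e (f c)) ->
  mseq f (a - dl)%R (act s H) = mseq f a H.
Proof.
move=> fs; rewrite /mseq; congr (_ :: _); apply: eq_map => k; congr inr.
rewrite (act_imset _ _ fs) -imset_comp; apply: eq_imset => w /=; rewrite proj_Tm.
by rewrite [(a - dl)%R]addrC addrA addrK.
Qed.

Lemma exec_act (s : {perm 'I_tot}) (f : {ffun 'I_tot -> 'rV[F]_(d.+1)}) dl e (rho : seq tk) (H : deal m tau) : rho != [::] ->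
  ohead rho = Some (inl f : tk) -> (forall c, f (s c) = Tm dl e (f c)) ->
  is_exec H rho -> is_exec (act s H) rho.
Proof.
move=> rn hr fs /(execP H rn) [hdl [s0 [ms pr]]]; apply/(execP _ rn); split; first exact: act_deal.
exists s0; split => //.
case/maxexecP: ms pr => f0 [a [b [fi [fsur [hA ->]]]]] pr.
have ff : f0 = f.
  by case: rho rn hr pr => [//|r0 r] _ /= [->] /andP [/eqP [->]].
subst f0; apply/maxexecP; exists f, (a - dl)%R, (b + e - dot (a - dl) dl)%R.
split => //; split => //; split; last by rewrite (mseq_act _ _ fs).
by rewrite (act_imset _ _ fs) Tm_setC hA Tm_hyper.
Qed.

Lemma sym_step rho c c' : is_run m F d tau rho ->
  exists s : {perm 'I_tot}, (forall H, is_exec H rho -> is_exec (act s H) rho) /\ s c = c'.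
Proof.
case=> H0 ex0; case: (eqVneq rho [::]) => [->|rn].
  by exists (tperm c c'); split; [move=> H; rewrite !exec_nil; apply: act_deal | rewrite tpermL].
have [_ [s0 [ms pr]]] := (execP H0 rn).1 ex0.
case/maxexecP: ms pr => f [a [b [fi [fs [hA ->]]]]] pr.
have hr : ohead rho = Some (inl f : tk).
  by case: rho rn pr {ex0} => [//|r0 r] _ /= /andP [/eqP -> _].
have [dl [e Te]] := Tm_trans (f c) (f c').
have [s sE] := build_perm dl e fi fs.
exists s; split; first by move=> H; apply: exec_act rn hr sE.
by apply: fi; rewrite sE Te.
Qed.

Lemma pj_pos H rho : is_exec H rho -> (0 < prob_joint H rho)%R.
Proof.
move=> ex; rewrite /prob_joint ex; apply: mulr_gt0.
  rewrite invr_gt0 ltr0n; apply/card_gt0P; exists H; rewrite inE.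
  by move/andP: ex => [].
apply: prodr_gt0 => i _; rewrite invr_gt0 ltr0n; apply/card_gt0P.
exists (nth tok0 rho i); move/andP: ex => [_ /allP]; apply.
by rewrite mem_iota add0n ltn_ord.
Qed.

Lemma pj_ge0 H rho : (0 <= prob_joint H rho)%R.
Proof.
case: (boolP (is_exec H rho)) => ex; first exact: ltW (pj_pos ex).
by rewrite /prob_joint (negbTE ex).
Qed.

Theorem safe : perfectly_safe m F d tau.
Proof.
move=> rho run c P.
pose D := fun H => is_exec H rho.
pose w := fun H => prob_joint H rho.
have Eev : forall E : pred dl, prob_ev E rho = (\sum_(H | D H && E H) w H)%R.
  move=> E; rewrite /prob_ev big_mkcond [RHS]big_mkcond; apply: eq_bigr => H _.
  rewrite /w /D; case: (boolP (is_exec H rho)) => ex /=.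
    by have -> : is_deal H by move/andP: ex => [].
  by rewrite /prob_joint (negbTE ex); case: ifP.
rewrite !Eev.
pose S := fun x : 'I_tot => (\sum_(H | D H && (x \in H P)) w H)%R.
have sym : forall x, S x = S c.
  move=> x; have [s [sD sc]] := sym_step c x run.
  rewrite /S; apply: (@sym_sum _ _ (fun H : dl => H P) D w c x (act s) (@act_inj s) sD).
    by move=> H DH; exact: pj_act DH (sD H DH).
  by move=> H; rewrite act_in -sc permK.
have cnt := @sum_cards _ _ (fun H : dl => H P) D w.
have L : (\sum_(x : 'I_tot) S x = tot%:R * S c)%R.
  by rewrite (eq_bigr _ (fun x _ => sym x)) sumr_const card_ord mulr_natl.
have R : (\sum_(H | D H) (#|H P|)%:R * w H = (tau P)%:R * \sum_(H | D H) w H)%R.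
  rewrite mulr_sumr; apply: eq_bigr => H DH.
  by case/andP: DH => /is_dealP [-> _] _.
rewrite /S in L; rewrite L R in cnt.
have [H0 ex0] := run.
have EW : (\sum_(H | D H && predT H) w H = \sum_(H | D H) w H)%R.
  by apply: eq_bigl => H; case: (D H).
rewrite EW.
have W0 : (\sum_(H | D H) w H != 0)%R.
  rewrite (bigD1 H0) //= lt0r_neq0 // ltr_pwDl ?pj_pos ?sumr_ge0 // => H _.
  exact: pj_ge0.
have t0 : (tot%:R != 0 :> rat)%R.
  by rewrite pnatr_eq0 -lt0n; apply: leq_ltn_trans (ltn_ord c).
apply/eqP; rewrite eqr_div //.
by rewrite mulrC cnt.
Qed.

End Proto.

Lemma sum_option (T : finType) (G : option T -> nat) :
  \sum_(P : option T) G P = G None + \sum_(k : T) G (Some k).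
Proof.
rewrite (bigD1 None) //=; congr (_ + _).
rewrite (reindex_omap Some (fun o => o)) => [|[i|] //].
by apply: eq_bigl => j; rewrite eqxx.
Qed.

Theorem mainTheorem2 :
  forall m : nat, 1 < m ->
  forall n : nat, exists a : nat, n < a /\ 0 < a /\
    exists (F : finFieldType) (d : nat) (tau : {ffun option 'I_m -> nat}),
      suitable m #|F| d tau /\
      (forall P : option 'I_m, a < tau P < 4 * m ^ 2 * a) /\
      informative m F d tau /\
      perfectly_safe m F d tau.
Proof.
case=> [//|m'] hm n.
set e := trunc_log 2 m'.+1.
have /andP [he1 he2] := trunc_log_bounds (isT : 1 < 2) (ltn0Sn m').
have [F _ cF] := pPrimePowerField (isT : prime 2) (ltn0Sn e).
set q := 2 ^ e.+1 in cF he2.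
have qm : q <= 2 * m'.+1 by rewrite /q expnS leq_mul2l.
have q0 : 0 < q by rewrite expn_gt0.
pose r := q ^ n.+1.
have rq : q <= r by rewrite /r expnS leq_pmulr // expn_gt0 q0.
have nr : n < r by apply: ltn_trans (ltn_expl n.+1 (ltn_trans hm he2)); rewrite /r.
have E2 : q ^ n.+2 = q * r by rewrite expnS.
have E3 : q ^ n.+3 = q * (q * r) by rewrite expnS E2.
pose tau : {ffun option 'I_m'.+1 -> nat} := [ffun P => if P is Some k then
   (if val k == 0 then q * r - m' * (r + 1) else r + 1) else q * (q * r) - q * r].
have I1 : m' * (r + 1) + r < q * r by nia.
have bnd : forall P, r < tau P < 4 * m'.+1 ^ 2 * r.
  move=> [k|]; rewrite ffunE; last by rewrite expnS expn1; nia.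
  by case: ifP => _; rewrite expnS expn1; nia.
have htot : Defs.total m'.+1 tau = #|F| ^ (n.+2).+1.
  rewrite /Defs.total sum_option big_ord_recl cF E3 !ffunE /=.
  rewrite (eq_bigr (fun _ => r + 1)) => [|i _]; last by rewrite ffunE.
  rewrite sum_nat_const card_ord; nia.
exists r; split => //; split; first by apply: leq_ltn_trans nr.
exists F, n.+2, tau.
have htauA : tau None = #|F| ^ (n.+2).+1 - #|F| ^ n.+2 by rewrite ffunE cF E3 E2.
have htauB : forall k, #|F| ^ (n.+2).-1 < tau (Some k).
  by move=> k; rewrite cF; have /andP [] := bnd (Some k).
split.
  split => //; split; first by rewrite cF.
  split; first by exists 2, e.+1; rewrite cF.
  split => //; split; first by move=> P; have /andP [h _] := bnd P; apply: leq_ltn_trans h.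
  by [].
split => //; split; first exact: inform htot htauA htauB.
exact: safe.
Qed.
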